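(* Let $X\subseteq\{0,1\}^{\mathbb Z}$ be a subshift and let $a_{-n+1}a_{-n+2}\dots a_{-1}a_0$ ($n\ge2$) be a block of length $n$ in $\mathcal L(\tilde X)$. If $a_{-n+1}a_{-n+2}\dots a_0$ is significant, then both $0a_{-n+2}\dots a_{-1}a_0$ and $1a_{-n+2}\dots a_{-1}a_0$ are in $\mathcal L(\tilde X)$.
   Context: $\sigma$ is the shift $(\sigma x)_i=x_{i+1}$; a subshift is a nonempty closed $\sigma$-invariant set. $X^+$ denotes the set of right rays $x_0x_1\dots$ of points $x\in X$, and $\tilde X=\{x\in\{0,1\}^{\mathbb Z}: x_px_{p+1}\dots\in X^+\ \forall p\in\mathbb Z\}$ (which equals $X$). $\mathcal L(\tilde X)$ is the set of finite blocks occurring in points of $\tilde X$. For $a_{-n}\dots a_0\in\mathcal L(\tilde X)$, $\mathrm{fol}(a_{-n}\dots a_0)=\{b_0b_1\dots\in X^+:\exists b\in\tilde X,\ b_{-n}\dots b_0=a_{-n}\dots a_0\}$. A block $a_{-n}\dots a_0$ with $n\ge1$ is significant if $\mathrm{fol}(a_{-n}\dots a_0)\subsetneq\mathrm{fol}(a_{-n+1}\dots a_0)$. *)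

(* Defs.v *)
From Stdlib Require Import ZArith List.
Open Scope Z_scope.

Definition point := Z -> bool.
Definition ray := nat -> bool.

Definition shift (x : point) : point := fun i => x (i + 1).

(* closed in the product topology: every point all of whose central
   windows [-N,N] are seen in X belongs to X *)
Definition closed_set (X : point -> Prop) : Prop :=
  forall x : point,
    (forall N : Z, exists y, X y /\ forall i, -N <= i <= N -> x i = y i) -> X x.

Definition shift_invariant (X : point -> Prop) : Prop :=
  (forall x, X x -> X (shift x)) /\
  (forall x, X x -> exists y, X y /\ forall i, shift y i = x i).

Definition subshift (X : point -> Prop) : Prop :=
  (exists x, X x) /\ closed_set X /\ shift_invariant X.

Definition rays (X : point -> Prop) (r : ray) : Prop :=
  exists x, X x /\ forall i : nat, r i = x (Z.of_nat i).

Definition tildeX (X : point -> Prop) (x : point) : Prop :=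
  forall p : Z, rays X (fun i : nat => x (p + Z.of_nat i)).

(* A block a_{-m+1} ... a_0 is a list w of length m; entry j of w is a_{j-(m-1)}.
   [ends_at0 b w] : b_{-m+1} ... b_0 = w. *)
Definition ends_at0 (b : point) (w : list bool) : Prop :=
  forall j : nat, (j < length w)%nat ->
    b (Z.of_nat j - Z.of_nat (length w - 1)) = nth j w false.

Definition in_lang (X : point -> Prop) (w : list bool) : Prop :=
  exists x p, tildeX X x /\
    forall j : nat, (j < length w)%nat -> x (p + Z.of_nat j) = nth j w false.

Definition fol (X : point -> Prop) (w : list bool) (r : ray) : Prop :=
  rays X r /\
  exists b, tildeX X b /\ ends_at0 b w /\ forall i : nat, r i = b (Z.of_nat i).

Definition strict_subset (A B : ray -> Prop) : Prop :=
  (forall r, A r -> B r) /\ exists r, B r /\ ~ A r.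

Definition significant (X : point -> Prop) (w : list bool) : Prop :=
  (2 <= length w)%nat /\ strict_subset (fol X w) (fol X (tl w)).

(* Main.v *)
Require Import Defs.
From Stdlib Require Import ZArith List Lia Bool.

Theorem proposition4p6 (X : point -> Prop) (w : list bool) :
  subshift X -> (2 <= length w)%nat -> in_lang X w -> significant X w ->
  in_lang X (false :: tl w) /\ in_lang X (true :: tl w).
Proof.
  intros _ Hlen Hw [_ [_ [r [[Hr [b [Hb [Hend Hrb]]]] Hnot]]]].
  destruct w as [|a t]; [simpl in Hlen; lia|].
  simpl tl in *. simpl length in Hlen.
  unfold ends_at0 in Hend.
  assert (Hneg : in_lang X (negb a :: t)).
  { exists b, (- Z.of_nat (length t)). split; [exact Hb|].
    intros j Hj. change (length (negb a :: t)) with (S (length t)) in Hj.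
    destruct j as [|j].
    - change (nth 0 (negb a :: t) false) with (negb a).
      replace (- Z.of_nat (length t) + Z.of_nat 0) with (- Z.of_nat (length t)) by lia.
      destruct (Bool.bool_dec (b (- Z.of_nat (length t))) a) as [E|E].
      + exfalso. apply Hnot. split; [exact Hr|].
        exists b. split; [exact Hb|]. split; [|exact Hrb].
        intros k Hk. change (length (a :: t)) with (S (length t)) in *.
        destruct k as [|k].
        * change (nth 0 (a :: t) false) with a.
          replace (Z.of_nat 0 - Z.of_nat (S (length t) - 1)) with (- Z.of_nat (length t)) by lia.
          exact E.
        * change (nth (S k) (a :: t) false) with (nth k t false).
          rewrite <- (Hend k) by lia. f_equal. lia.
      + destruct a, (b _); simpl; congruence.
    - change (nth (S j) (negb a :: t) false) with (nth j t false).
      rewrite <- (Hend j) by lia. f_equal. lia. }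
  destruct a; simpl in Hneg; split; assumption.
Qed.
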